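(* Consider the house allocation model, i.e., an FEE problem with $|O|=|I|$ and $\omega_{i,o}=1/|I|$ for all $i\in I$, $o\in O$, with arbitrary (possibly non-strict) complete transitive preferences. Every FTTC mechanism satisfying stepwise equal-endowment equal treatment produces an assignment $p$ that is sd-efficient and envy-free (for all $i,j\in I$, $p_i\succsim^{sd}_i p_j$).
   Context: Fractional endowment exchange (FEE) problem: a tuple $(I,O,\succsim_I,\omega)$ where $I$ is a finite set of agents, $O$ a finite set of objects, each agent $i$ has a complete and transitive (possibly non-strict) preference relation $\succsim_i$ over $O$ with asymmetric part $\succ_i$ and symmetric part $\sim_i$, and $\omega=(\omega_{i,o})_{i\in I,o\in O}$ is an endowment matrix with $\omega_{i,o}\in[0,1]$, $\sum_{o\in O}\omega_{i,o}\le 1$ for each $i$, and $q_o=\sum_{i\in I}\omega_{i,o}$ an integer for each $o$. An assignment is a nonnegative matrix $p=(p_{i,o})$ with $\sum_i p_{i,o}\le q_o$ for all $o$ and $\sum_o p_{i,o}\le 1$ for all $i$; $p_i=(p_{i,o})_{o\in O}$ is $i$'s lottery; $\omega_i=(\omega_{i,o})_{o\in O}$. Stochastic dominance: for $l,l'\in\mathbb R^{O}_+$, $l\succsim^{sd}_i l'$ if $\sum_{o'\succsim_i o}l_{o'}\ge\sum_{o'\succsim_i o}l'_{o'}$ for all $o\in O$, strictly ($\succ^{sd}_i$) if some inequality is strict. $p$ strictly stochastically dominates $p'$ if $p_i\succsim^{sd}_ip'_i$ for all $i$ and $p_j\succ^{sd}_jp'_j$ for some $j$; $p$ is sd-efficient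 if no assignment strictly stochastically dominates it. FTTC (Fractional Top Trading Cycle) on the full preference domain. Initialize $\omega(0)=\omega$, $p(0)=0$, $O(0)=O$. At step $d\ge1$ (with $O(d-1)\ne\emptyset$): (i) Labeling. Put $T_0=O(d-1)$. For $k=1,2,\dots$: let $L_k$ be the set of agents $i\notin L_1\cup\dots\cup L_{k-1}$ for which there exist $o\in T_{k-1}$ and $o'\in O\setminus(T_0\cup\dots\cup T_{k-1})$ with $p_{i,o'}(d-1)>0$ and $o\sim_i o'$; for $i\in L_k$ let $\tilde O_i(d-1)$ be the set of all such $o'$ for this $i$, and let $T_k=\bigcup_{i\in L_k}\tilde O_i(d-1)$. Stop at the first $k$ with $L_k=\emptyset$. Set $L(d-1)=\bigcup_k L_k$, $\tilde O(d-1)=\bigcup_{k\ge1}T_k$, $\overline{O}(d-1)=O(d-1)\cup\tilde O(d-1)$, and $\tilde O_i(d-1)=\emptyset$ for $i\notin L(d-1)$. (ii) Pointing. The active agents are $I(d-1)=L(d-1)\cup\{i\in I:\sum_o\omega_{i,o}(d-1)>0\}$. For $i\in I(d-1)$ let $B_i$ be the set of $\succsim_i$-maximal elements of $\overline{O}(d-1)$, let $k_i$ be the least $k\ge0$ with $B_i\cap T_k\ne\emptyset$, and let $A_i(d)=B_i\cap T_{k_i}$. (iii) Trading. The mechanism chooses (possibly depending on the history): a ratio matrix $\lambda(d)=(\lambda_{i,o}(d))_{i\in I(d-1),o\in\overline{O}(d-1)}$, nonnegative, with $\sum_{i\in I(d-1)}\lambda_{i,o}(d)=1$ for each $o\in\overline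 O(d-1)$, $\lambda_{i,o}(d)>0$ only if $\omega_{i,o}(d-1)>0$ (for $o\in O(d-1)$) and only if $o\in\tilde O_i(d-1)$ (for $o\in\tilde O(d-1)$); a quota matrix $\beta(d)$ on $I(d-1)\times O(d-1)$ with $0\le\beta_{i,o}(d)\le\omega_{i,o}(d-1)$; a division matrix $\gamma(d)$ on $I(d-1)\times\overline O(d-1)$, nonnegative, with $\sum_o\gamma_{i,o}(d)=1$ and $\gamma_{i,o}(d)>0$ only if $o\in A_i(d)$. Let $x^*(d)=(x^*_a(d))_{a\in I(d-1)\cup\overline O(d-1)}$ be the maximum (componentwise largest) nonnegative solution of $x_o=\sum_{i\in I(d-1)}\gamma_{i,o}(d)x_i$ for all $o\in\overline O(d-1)$ and $x_i=\sum_{o\in\overline O(d-1)}\lambda_{i,o}(d)x_o$ for all $i\in I(d-1)$, subject to $\lambda_{i,o}(d)x_o\le\beta_{i,o}(d)$ for $o\in O(d-1)$ and $\lambda_{i,o}(d)x_o\le p_{i,o}(d-1)$ for $o\in\tilde O(d-1)$. For $i\in I(d-1)$: $\omega_{i,o}(d)=\omega_{i,o}(d-1)-\lambda_{i,o}(d)x^*_o(d)$ if $o\in O(d-1)$ and $0$ otherwise; $p_{i,o}(d)=p_{i,o}(d-1)-\mathbf 1[o\in\tilde O_i(d-1)]\lambda_{i,o}(d)x^*_o(d)+\gamma_{i,o}(d)x^*_i(d)$ (with $\gamma_{i,o}(d)=0$ for $o\notin\overline O(d-1)$). For $i\notin I(d-1)$, $\omega_i(d)=\omega_i(d-1)$,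 $p_i(d)=p_i(d-1)$. Let $O(d)=\{o\in O(d-1):\sum_i\omega_{i,o}(d)>0\}$. If $O(d)=\emptyset$ stop and output $p(d)$; otherwise go to step $d+1$. (Standing assumption: the maximum solution exists at each step and the procedure ends after finitely many steps.) An FTTC mechanism is specified by a rule choosing $\lambda(d),\beta(d),\gamma(d)$ at every step. Stepwise equal-endowment equal treatment (stepwise EEET): at every step $d$, for all $i,j\in I(d-1)$, if $\omega_i(d-1)=\omega_j(d-1)$ then $\lambda_{i,o}(d)=\lambda_{j,o}(d)$ for all $o\in O(d-1)$. *)

(* Defs.v *)
From mathcomp Require Import all_boot all_order all_algebra.
From mathcomp Require Import reals.

Set Implicit Arguments.
Unset Strict Implicit.
Unset Printing Implicit Defensive.

Import Order.TTheory GRing.Theory Num.Theory.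
Local Open Scope ring_scope.

Section FEE.

Variables (R : realType) (I O : finType).
(* pref i a b  means  a ≿_i b *)
Variable pref : I -> rel O.

Definition complete_pref (r : rel O) := forall a b, r a b || r b a.
Definition transitive_pref (r : rel O) := forall a b c, r a b -> r b c -> r a c.

Definition indiff (i : I) (a b : O) := pref i a b && pref i b a.

Definition upper_sum (i : I) (l : O -> R) (o : O) := \sum_(o' | pref i o' o) l o'.

Definition sd_geq (i : I) (l l' : O -> R) := forall o, upper_sum i l' o <= upper_sum i l o.
Definition sd_gt (i : I) (l l' : O -> R) :=
  sd_geq i l l' /\ exists o, upper_sum i l' o < upper_sum i l o.

Definition is_assignment (q : O -> R) (P : I -> O -> R) :=
  (forall i o, 0 <= P i o) /\ (forall o, \sum_i P i o <= q o) /\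
  (forall i, \sum_o P i o <= 1).

Definition sd_efficient (q : O -> R) (P : I -> O -> R) :=
  ~ exists P' : I -> O -> R, is_assignment q P' /\
      (forall i, sd_geq i (P' i) (P i)) /\ exists j, sd_gt j (P' j) (P j).

Definition envy_free (P : I -> O -> R) := forall i j, sd_geq i (P i) (P j).

Section Step.
(* Oc = O(d-1), om = omega(d-1), P = p(d-1) *)
Variables (Oc : {set O}) (om P : I -> O -> R).

Record lab_state := LabState {
  lab_L : {set I};      (* L_1 ∪ ... ∪ L_k *)
  lab_T : {set O};      (* T_0 ∪ ... ∪ T_k *)
  lab_last : {set O} }.

(* L_{k+1}, computed from the state after layer k *)
Definition new_layer (s : lab_state) : {set I} :=
  [set i | (i \notin lab_L s) &&
     [exists o in lab_last s, [exists o' in ~: lab_T s, (0 < P i o') && indiff i o o']]].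

Definition new_objs (i : I) (s : lab_state) : {set O} :=
  [set o' | [&& o' \notin lab_T s, 0 < P i o' & [exists o in lab_last s, indiff i o o']]].

Definition new_T (s : lab_state) : {set O} :=
  \bigcup_(i in new_layer s) new_objs i s.

Fixpoint lab (k : nat) : lab_state :=
  match k with
  | 0 => LabState set0 Oc Oc
  | k'.+1 => let s := lab k' in
             LabState (lab_L s :|: new_layer s) (lab_T s :|: new_T s) (new_T s)
  end.

(* enough iterations: every nonempty layer L_k contains a new agent *)
Definition nlab := #|I|.+1.

Definition Tk (k : nat) : {set O} := lab_last (lab k).
Definition Lset : {set I} := lab_L (lab nlab).
Definition Obar : {set O} := lab_T (lab nlab).
Definition Otil : {set O} := Obar :\: Oc.
Definition Otil_i (i : I) : {set O} :=
  \bigcup_(k < nlab | i \in new_layer (lab k)) new_objs i (lab k).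

Definition Iact : {set I} := Lset :|: [set i | 0 < \sum_o om i o].
Definition Best (i : I) : {set O} := [set o in Obar | [forall o' in Obar, pref i o o']].
Definition Aset (i : I) : {set O} :=
  [set o in Best i | [exists k : 'I_nlab.+1,
      (o \in Tk k) && [forall k' : 'I_nlab.+1, (k' < k)%N ==> [disjoint Best i & Tk k']]]].

Variables (lam beta gam : I -> O -> R).

Definition ratio_ok :=
  (forall i o, i \in Iact -> o \in Obar -> 0 <= lam i o) /\
  (forall o, o \in Obar -> \sum_(i in Iact) lam i o = 1) /\
  (forall i o, i \in Iact -> o \in Oc -> 0 < lam i o -> 0 < om i o) /\
  (forall i o, i \in Iact -> o \in Otil -> 0 < lam i o -> o \in Otil_i i).

Definition quota_ok :=
  forall i o, i \in Iact -> o \in Oc -> 0 <= beta i o /\ beta i o <= om i o.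

Definition division_ok :=
  (forall i o, i \in Iact -> o \in Obar -> 0 <= gam i o) /\
  (forall i, i \in Iact -> \sum_(o in Obar) gam i o = 1) /\
  (forall i o, i \in Iact -> o \in Obar -> 0 < gam i o -> o \in Aset i).

Definition feasible (x : I -> R) (y : O -> R) :=
  (forall i, i \in Iact -> 0 <= x i) /\
  (forall o, o \in Obar -> 0 <= y o) /\
  (forall o, o \in Obar -> y o = \sum_(i in Iact) gam i o * x i) /\
  (forall i, i \in Iact -> x i = \sum_(o in Obar) lam i o * y o) /\
  (forall i o, i \in Iact -> o \in Oc -> lam i o * y o <= beta i o) /\
  (forall i o, i \in Iact -> o \in Otil -> lam i o * y o <= P i o).

Definition max_solution (xI : I -> R) (xO : O -> R) :=
  feasible xI xO /\
  forall x y, feasible x y ->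
    (forall i, i \in Iact -> x i <= xI i) /\ (forall o, o \in Obar -> y o <= xO o).

Definition fttc_step (xI : I -> R) (xO : O -> R) (om' P' : I -> O -> R) :=
  ratio_ok /\ quota_ok /\ division_ok /\ max_solution xI xO /\
      (forall i o, om' i o =
         if i \in Iact then (if o \in Oc then om i o - lam i o * xO o else 0)
         else om i o) /\
      (forall i o, P' i o =
         if i \in Iact then
           P i o - (if o \in Otil_i i then lam i o * xO o else 0)
                 + (if o \in Obar then gam i o * xI i else 0)
         else P i o).

Definition EEET_step :=
  forall i j, i \in Iact -> j \in Iact -> om i =1 om j ->
    forall o, o \in Oc -> lam i o = lam j o.

End Step.

Fixpoint Oset (om : nat -> I -> O -> R) (d : nat) : {set O} :=
  match d with
  | 0 => setT
  | d'.+1 => [set o in Oset om d' | 0 < \sum_i om d i o]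
  end.

(* A terminating run of an FTTC mechanism: states omega(d), p(d) for d <= D, and the
   choices lam(d), beta(d), gam(d) with maximum solution (xI(d), xO(d)) of step d >= 1;
   D is the first step with O(D) empty, and p(D) is the output. *)
Definition fttc_run (om p : nat -> I -> O -> R) (lam beta gam : nat -> I -> O -> R)
    (xI : nat -> I -> R) (xO : nat -> O -> R) (D : nat) :=
  [/\ (forall i o, p 0%N i o = 0),
      (forall d, (d < D)%N -> Oset om d != set0),
      Oset om D = set0 &
      (forall d, (d < D)%N ->
         fttc_step (Oset om d) (om d) (p d) (lam d.+1) (beta d.+1) (gam d.+1)
                   (xI d.+1) (xO d.+1) (om d.+1) (p d.+1))].

Definition run_EEET (om p : nat -> I -> O -> R) (lam : nat -> I -> O -> R) (D : nat) :=
  forall d, (d < D)%N -> EEET_step (Oset om d) (om d) (p d) (lam d.+1).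

End FEE.

(* Main.v *)
Require Import Defs.
From mathcomp Require Import all_boot all_order all_algebra.
From mathcomp Require Import reals lra.
Import Order.TTheory GRing.Theory Num.Theory.
Local Open Scope ring_scope.
Set Implicit Arguments. Unset Strict Implicit. Unset Printing Implicit Defensive.

Section Gen.
Variables (R : realType) (I O : finType) (pref : I -> rel O).
Variables (Oc : {set O}) (P : I -> O -> R).

Local Notation lab := (lab pref Oc P).
Local Notation Tk := (Tk pref Oc P).
Local Notation new_layer := (new_layer pref P).
Local Notation new_objs := (new_objs pref P).
Local Notation new_T := (new_T pref P).
Local Notation Obar := (Obar pref Oc P).

Lemma labT_S k : lab_T (lab k.+1) = lab_T (lab k) :|: new_T (lab k).
Proof. by []. Qed.
Lemma labL_S k : lab_L (lab k.+1) = lab_L (lab k) :|: new_layer (lab k).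
Proof. by []. Qed.
Lemma Tk_S k : Tk k.+1 = new_T (lab k).
Proof. by []. Qed.

Lemma labT_mono k k' : (k <= k')%N -> lab_T (lab k) \subset lab_T (lab k').
Proof.
move=> /subnK <-; elim: (k' - k)%N => [|m IH] //=.
apply: subset_trans IH _; exact: subsetUl.
Qed.

Lemma last_sub_T k : Tk k \subset lab_T (lab k).
Proof. by case: k => [|k] //=; rewrite /Tk /= subsetUr. Qed.

Lemma labT_Obar k : (k <= nlab I)%N -> lab_T (lab k) \subset Obar.
Proof. by move=> hk; apply: labT_mono. Qed.

Lemma Oc_Obar : Oc \subset Obar.
Proof. exact: (labT_Obar (k:=0)). Qed.

Lemma newT_Obar k : (k < nlab I)%N -> new_T (lab k) \subset Obar.
Proof. move=> hk; rewrite -[new_T _]/(Tk k.+1). apply: subset_trans (last_sub_T _) (labT_Obar hk). Qed.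

Lemma mem_labT k o : o \in lab_T (lab k) -> exists2 m, (m <= k)%N & o \in Tk m.
Proof.
elim: k => [|k IH] /=; first by move=> h; exists 0%N.
rewrite in_setU => /orP [/IH [m hm hom]|h]; first by exists m => //; apply: leqW.
by exists k.+1.
Qed.

Lemma mem_labL k i : i \in lab_L (lab k) -> exists2 m, (m < k)%N & i \in new_layer (lab m).
Proof.
elim: k => [|k IH] /=; first by rewrite in_set0.
rewrite in_setU => /orP [/IH [m hm hom]|h]; first by exists m => //; apply: ltnW.
by exists k.
Qed.

Lemma newT_mem o s : o \in new_T s -> exists2 i, i \in new_layer s & o \in new_objs i s.
Proof. by move=> /bigcupP [i hi ho]; exists i. Qed.

Lemma card_labL m : Tk m.+1 != set0 -> (m.+1 <= #|lab_L (lab m.+1)|)%N.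
Proof.
elim: m => [|m IH] h.
  have /set0Pn [o /newT_mem [i hi _]] := h.
  by rewrite labL_S card_gt0; apply/set0Pn; exists i; rewrite in_setU hi orbT.
have /set0Pn [o /newT_mem [i hi hoi]] := h.
have hTm : Tk m.+1 != set0.
  move: hoi; rewrite /new_objs inE => /and3P [_ _ /existsP [o0 /andP [h0 _]]].
  by apply/set0Pn; exists o0.
have := IH hTm; rewrite labL_S => hc.
have hiL : i \notin lab_L (lab m.+1) by move: hi; rewrite /new_layer inE => /andP [].
apply: leq_ltn_trans hc _.
apply: proper_card; rewrite properEneq subsetUl andbT.
apply/eqP => e. have : i \in lab_L (lab m.+1) :|: new_layer (lab m.+1) by rewrite in_setU hi orbT.
by rewrite labL_S in e; rewrite -e (negbTE hiL).
Qed.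

Lemma Tk_nlab : Tk (nlab I) = set0.
Proof.
apply/eqP; apply/negPn/negP => h.
have hc := card_labL h.
have := leq_trans hc (max_card _); by rewrite ltnn.
Qed.

Lemma Otil_i_sub i : Otil_i pref Oc P i \subset Obar :\: Oc.
Proof.
apply/subsetP => o /bigcupP [k hk hi] ; rewrite in_setD.
have ho := hi; move: hi; rewrite /new_objs inE => /and3P [hnT _ _].
apply/andP; split.
  by apply: contra hnT => hoc; apply: (subsetP (labT_mono (leq0n k))).
apply: (subsetP (newT_Obar (ltn_ord k))); apply/bigcupP; exists i => //.
Qed.

Lemma Oc0_Obar : Oc = set0 -> Obar = set0.
Proof.
move=> h0.
suff : forall k, lab_T (lab k) = set0 /\ Tk k = set0 by move=> /(_ (nlab I)) [].
elim => [|k [IH1 IH2]] /=; first by rewrite /Tk /= h0.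
have hn : new_T (lab k) = set0.
  apply/eqP; rewrite -subset0; apply/subsetP => o /newT_mem [i hi _].
  move: hi; rewrite inE => /andP [_ /existsP [o0 /andP [h _]]].
  by move: h; rewrite -[lab_last _]/(Tk k) IH2 in_set0.
by rewrite /Tk /= IH1 hn setU0.
Qed.

End Gen.

Section Gen2.
Variables (R : realType) (I O : finType) (pref : I -> rel O).
Hypothesis Hc : forall i, complete_pref (pref i).
Hypothesis Ht : forall i, transitive_pref (pref i).

Lemma pref_refl i a : pref i a a.
Proof. by have := Hc i a a; rewrite orbb. Qed.

Lemma ptrans k a b c : pref k a b -> pref k b c -> pref k a c.
Proof. exact: Ht. Qed.

Definition Hold (Oc : {set O}) (P : I -> O -> R) :=
  forall k o, 0 < P k o -> forall b, b \in Obar pref Oc P -> pref k o b.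

Lemma close_gen (Oc : {set O}) (P : I -> O -> R) m k b o : (m < nlab I)%N ->
  k \in new_layer pref P (lab pref Oc P m) -> b \in Tk pref Oc P m ->
  indiff pref k b o -> 0 < P k o -> o \in Obar pref Oc P.
Proof.
move=> hm hk hb hind hp.
case: (boolP (o \in lab_T (lab pref Oc P m))) => [h|h].
  exact: (subsetP (labT_Obar _ _ _ (ltnW hm))).
apply: (subsetP (newT_Obar _ _ _ hm)); apply/bigcupP; exists k => //.
rewrite inE h hp /=; apply/existsP; exists b; by rewrite hind andbT.
Qed.

Lemma K_gen (Oc : {set O}) (P : I -> O -> R) k o b : Hold Oc P -> 0 < P k o ->
  o \notin Obar pref Oc P -> b \in Obar pref Oc P -> ~~ pref k b o.
Proof.
move=> HH hp hnot hb; apply/negP => hbo.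
have hob := HH _ _ hp.
have [m hm hbm] := mem_labT hb.
have hmn : (m < nlab I)%N.
  rewrite ltn_neqAle hm andbT; apply/eqP => e; move: hbm; by rewrite e Tk_nlab in_set0.
case: (boolP (k \in lab_L (lab pref Oc P m))) => hkL.
  have [m' hm' hk'] := mem_labL hkL.
  have hk'2 := hk'.
  move: hk'; rewrite inE => /andP [_ /existsP [o1 /andP [ho1 /existsP [o1' /andP [ho1' /andP [hp1 hind1]]]]]].
  have hmn' : (m' < nlab I)%N by apply: ltn_trans hm' hmn.
  have ho1'O : o1' \in Obar pref Oc P by apply: (close_gen hmn' hk'2 ho1 hind1 hp1).
  move: hind1; rewrite /indiff => /andP [h11 h12].
  have h1o : pref k o1' o by apply: (ptrans (HH _ _ hp1 _ hb) hbo).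
  have hind : indiff pref k o1 o.
    rewrite /indiff; apply/andP; split; first exact: ptrans h11 h1o.
    exact: (ptrans (hob _ ho1'O) h12).
  by move: hnot; rewrite (close_gen hmn' hk'2 ho1 hind hp).
have hnl : k \in new_layer pref P (lab pref Oc P m).
  rewrite inE hkL /=; apply/existsP; exists b; rewrite hbm /=.
  apply/existsP; exists o; rewrite inE hp /indiff hbo (hob _ hb) /= andbT.
  by apply: contra hnot => h; apply: (subsetP (labT_Obar _ _ _ (ltnW hmn))).
have hind : indiff pref k b o by rewrite /indiff hbo (hob _ hb).
by move: hnot; rewrite (close_gen hmn hnl hbm hind hp).
Qed.

Lemma Mono_gen (Oc : {set O}) (P : I -> O -> R) (Oc' : {set O}) (P' : I -> O -> R) :
  Oc' \subset Oc -> (forall k o, 0 < P' k o -> 0 < P k o \/ o \in Obar pref Oc P) ->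
  Hold Oc P -> Obar pref Oc' P' \subset Obar pref Oc P.
Proof.
move=> hsub hsupp HH.
suff : forall m, lab_T (lab pref Oc' P' m) \subset Obar pref Oc P by apply.
elim => [|m IH]; first by apply: subset_trans hsub (Oc_Obar _ _ _).
rewrite labT_S subUset IH /=; apply/subsetP => o /newT_mem [k hk ho].
move: ho; rewrite inE => /and3P [_ hp /existsP [b /andP [hb hind]]].
have hbO : b \in Obar pref Oc P by apply: (subsetP IH); apply: (subsetP (last_sub_T _ _ _ _)).
case: (hsupp k o hp) => [hp0|] //.
case: (boolP (o \in Obar pref Oc P)) => // hn.
have := K_gen HH hp0 hn hbO; by move: hind; rewrite /indiff => /andP [->].
Qed.

End Gen2.

Lemma Aset_best (R : realType) (I O : finType) (pref : I -> rel O) (Oc : {set O})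
  (P : I -> O -> R) i o : o \in Aset pref Oc P i ->
  o \in Obar pref Oc P /\ forall b, b \in Obar pref Oc P -> pref i o b.
Proof.
rewrite /Aset inE => /andP [] ; rewrite /Best inE => /andP [h1 /forallP h2] _.
split => // b hb; have := h2 b; by rewrite hb.
Qed.

Lemma sum_if_sub (R : realType) (O : finType) (S X : {set O}) (f : O -> R) :
  S \subset X -> \sum_(o in X) (if o \in S then f o else 0) = \sum_(o in S) f o.
Proof.
move=> hsub; rewrite big_mkcond [RHS]big_mkcond; apply: eq_bigr => o _.
case: (boolP (o \in S)) => h; first by rewrite (subsetP hsub _ h).
by case: (o \in X).
Qed.

Lemma sum_sub_eq (R : realType) (O : finType) (Y X : {set O}) (F : O -> R) :
  Y \subset X -> (forall o, o \in X -> o \notin Y -> F o = 0) ->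
  \sum_(o in X) F o = \sum_(o in Y) F o.
Proof.
move=> hs h; rewrite -(sum_if_sub _ hs); apply: eq_bigr => o ho.
by case: ifP => // hy; rewrite h // hy.
Qed.

Lemma sum_sub_le (R : realType) (O : finType) (Y X : {set O}) (F : O -> R) :
  Y \subset X -> (forall o, 0 <= F o) -> \sum_(o in Y) F o <= \sum_(o in X) F o.
Proof.
move=> hs h; rewrite -(sum_if_sub _ hs); apply: ler_sum => o _.
by case: ifP.
Qed.

Lemma sd_upper (R : realType) (I O : finType) (pref : I -> rel O)
  (Hc : forall i, complete_pref (pref i)) (Ht : forall i, transitive_pref (pref i))
  i (l l' : O -> R) (S : {set O}) : sd_geq pref i l l' ->
  (forall a b, a \in S -> pref i b a -> b \in S) ->
  \sum_(o in S) l' o <= \sum_(o in S) l o.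
Proof.
move=> hsd hup.
case: (set_0Vmem S) => [->|[m0 hm0]]; first by rewrite !big_set0.
pose r o := #|[set y | pref i o y]|.
case: (@arg_minnP _ m0 (mem S) r hm0) => m hmS hmin.
have eS : forall o, (o \in S) = pref i o m.
  move=> o; apply/idP/idP => [ho|ho]; last exact: hup ho.
  apply/negPn/negP => hn.
  have hmo : pref i m o by have := Hc i o m; rewrite (negbTE hn).
  have := hmin o ho; rewrite leqNgt => /negP; apply.
  apply: proper_card; rewrite properE; apply/andP; split.
    apply/subsetP => y; rewrite !inE => hy; exact: (Ht i _ _ _ hmo hy).
  apply/subsetP => hsub; have := hsub m.
  rewrite !inE (pref_refl Hc) => /(_ isT); by rewrite (negbTE hn).
have eS' : forall F : O -> R, \sum_(o in S) F o = \sum_(o | pref i o m) F o.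
  by move=> F; apply: eq_bigl => o; rewrite eS.
rewrite !eS'; exact: hsd m.
Qed.

Section Run.
Variables (R : realType) (I O : finType) (pref : I -> rel O).
Variables (om p : nat -> I -> O -> R) (lam beta gam : nat -> I -> O -> R).
Variables (xI : nat -> I -> R) (xO : nat -> O -> R) (D : nat).
Hypothesis Hc : forall i, complete_pref (pref i).
Hypothesis Ht : forall i, transitive_pref (pref i).
Hypothesis HOI : #|O| = #|I|.
Hypothesis Hom0 : forall i o, om 0%N i o = (#|I|%:R)^-1.
Hypothesis Hrun : fttc_run pref om p lam beta gam xI xO D.
Hypothesis HE : run_EEET pref om p lam D.

Local Notation Oc d := (Oset om d).
Local Notation B d := (Obar pref (Oset om d) (p d)).
Local Notation Ia d := (Iact pref (Oset om d) (om d) (p d)).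
Local Notation Oti d := (Otil_i pref (Oset om d) (p d)).

Lemma hp0 i o : p 0%N i o = 0. Proof. by case: Hrun. Qed.
Lemma hne d : (d < D)%N -> Oc d != set0. Proof. by case: Hrun => _ h _ _; apply: h. Qed.
Lemma hOD : Oc D = set0. Proof. by case: Hrun. Qed.
Lemma hstep d : (d < D)%N ->
  fttc_step pref (Oc d) (om d) (p d) (lam d.+1) (beta d.+1) (gam d.+1)
                   (xI d.+1) (xO d.+1) (om d.+1) (p d.+1).
Proof. by case: Hrun => _ _ _; apply. Qed.

Ltac stepd hd :=
  have [[hl1 [hl2 [hl3 hl4]]] [hq [[hg1 [hg2 hg3]]
        [[[hx1 [hy1 [hy2 [hx2 [hc1 hc2]]]]] _] [homE hpE]]]]] := hstep hd.

Lemma Oc_B d : Oc d \subset B d. Proof. exact: Oc_Obar. Qed.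
Lemma Oti_sub d i o : o \in Oti d i -> o \in B d /\ o \notin Oc d.
Proof. move=> /(subsetP (Otil_i_sub _ _ _ _)); rewrite in_setD => /andP [] //. Qed.

Lemma nonneg d : (d <= D)%N -> forall i o, 0 <= om d i o /\ 0 <= p d i o.
Proof.
elim: d => [|d IH] hd i o.
  by rewrite Hom0 hp0 invr_ge0 ler0n lexx.
have hd' : (d < D)%N by [].
have IH' := IH (ltnW hd'). stepd hd'.
split.
  rewrite homE; case: ifP => hi; last by case: (IH' i o).
  case: ifP => ho //; rewrite subr_ge0.
  have [_ hb] := hq i o hi ho; apply: le_trans hb; exact: hc1.
rewrite hpE; case: ifP => hi; last by case: (IH' i o).
apply: addr_ge0.
  case: ifP => ho; last by rewrite subr0; case: (IH' i o).
  rewrite subr_ge0; apply: hc2 => //; rewrite /Otil in_setD.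
  by have [-> ->] := Oti_sub ho.
case: ifP => ho //; apply: mulr_ge0; [exact: hg1 | exact: hx1].
Qed.


Lemma zero_out d : (d <= D)%N -> forall i o, o \notin Oc d -> om d i o = 0.
Proof.
elim: d => [|d IH] hd i o; first by rewrite /= in_setT.
have hd' : (d < D)%N by [].
stepd hd'.
rewrite /= inE negb_and => /orP [h|h].
  rewrite homE (negbTE h); case: ifP => // _; exact: IH (ltnW hd') _ _ h.
have hs : \sum_i om d.+1 i o == 0.
  rewrite eq_le sumr_ge0 ?andbT; last by move=> j _; case: (nonneg hd j o).
  by rewrite leNgt.
have h0 := psumr_eq0P (fun j (_ : true) => proj1 (nonneg hd j o)) (eqP hs).
exact: h0 i isT.
Qed.

Lemma pos_sum d o : (d <= D)%N -> o \in Oc d -> 0 < \sum_i om d i o.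
Proof.
case: d => [|d] hd /=; last by rewrite inE => /andP [].
move=> _.
rewrite (eq_bigr (fun _ => (#|I|%:R)^-1)); last by move=> i _; rewrite Hom0.
have hI : (0 < #|I|)%N by rewrite -HOI; apply/card_gt0P; exists o.
have [i0 _] : exists i0 : I, true by move/card_gt0P: hI => [i0 _]; exists i0.
rewrite sumr_const pmulrn_lgt0 ?invr_gt0 ?ltr0n //.

Qed.

Lemma sum_ge_term (F : O -> R) o : (forall o', 0 <= F o') -> F o <= \sum_o' F o'.
Proof.
move=> h; rewrite (bigD1 o) //= lerDl; apply: sumr_ge0 => ? _; exact: h.
Qed.

Lemma act d : (d < D)%N -> (forall i j, om d i =1 om d j) -> forall k, k \in Ia d.
Proof.
move=> hd heq k.
have /set0Pn [o ho] := hne hd.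
have hpos := pos_sum (ltnW hd) ho.
have [i0 hi0] : exists i0, 0 < om d i0 o.
  case: (boolP [exists i0, 0 < om d i0 o]) => [/existsP //|/existsPn hall].
  exfalso; move: hpos; rewrite ltNge => /negP; apply.
  have : \sum_i om d i o <= \sum_(i : I) (0:R).
    by apply: ler_sum => i _; have := hall i; rewrite -leNgt.
  by rewrite big1_eq.
rewrite /Iact in_setU; apply/orP; right; rewrite inE.
apply: lt_le_trans (sum_ge_term o (fun o' => proj1 (nonneg (ltnW hd) k o'))).
by rewrite (heq k i0).
Qed.

Lemma eqom d : (d <= D)%N -> forall i j, om d i =1 om d j.
Proof.
elim: d => [|d IH] hd i j o; first by rewrite !Hom0.
have hd' : (d < D)%N by [].
have IH' := IH (ltnW hd').
have ha := act hd' IH'.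
stepd hd'.
rewrite !homE !ha; case: ifP => // ho.
by rewrite (IH' i j o) (HE hd' (ha i) (ha j) (IH' i j) ho).
Qed.

Lemma actD d : (d < D)%N -> forall k, k \in Ia d.
Proof. move=> hd; apply: act hd (eqom (ltnW hd)). Qed.

Lemma lam_eq d : (d < D)%N -> forall i j o, o \in Oc d -> lam d.+1 i o = lam d.+1 j o.
Proof.
move=> hd i j o ho; apply: (HE hd (actD hd i) (actD hd j)) => //.
exact: eqom (ltnW hd) i j.
Qed.


Lemma Oset_S d : Oc d.+1 \subset Oc d.
Proof. by apply/subsetP => x; rewrite /= inE => /andP []. Qed.

Lemma sold_ge0 d k o : (d < D)%N ->
  0 <= (if o \in Oti d k then lam d.+1 k o * xO d.+1 o else 0).
Proof.
move=> hd; stepd hd; case: ifP => // ho.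
have [hoB _] := Oti_sub ho.
apply: mulr_ge0; [exact: hl1 (actD hd k) hoB | exact: hy1].
Qed.

Lemma support d k o : (d < D)%N -> 0 < p d.+1 k o ->
  0 < p d k o \/ (o \in B d /\ 0 < gam d.+1 k o).
Proof.
move=> hd h.
have hs := sold_ge0 k o hd.
have [_ hp] := nonneg (ltnW hd) k o.
stepd hd; move: h; rewrite hpE (actD hd k) => h.
case: (boolP (0 < p d k o)) => hpk; [by left | right].
have hp0' : p d k o <= 0 by rewrite leNgt.
case: (boolP (o \in B d)) => hB; last first.
  by move: h; rewrite (negbTE hB); lra.
split => //.
move: h; rewrite hB => h.
have hx := hx1 k (actD hd k).
have hg := hg1 k o (actD hd k) hB.
rewrite lt_neqAle hg andbT; apply/eqP => e.
by move: h; rewrite -e mul0r; lra.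
Qed.

Lemma p_out d k o : (d < D)%N -> o \notin B d -> p d.+1 k o = p d k o.
Proof.
move=> hd hB; stepd hd; rewrite hpE (actD hd k) (negbTE hB).
case: ifP => ho; last by rewrite subr0 addr0.
by have [h _] := Oti_sub ho; move: hB; rewrite h.
Qed.

Lemma HoldD d : (d <= D)%N -> Hold pref (Oc d) (p d) /\
   ((d < D)%N -> B d.+1 \subset B d).
Proof.
elim: d => [|d IH] hd.
  split; first by move=> k o; rewrite hp0 ltxx.
  move=> hD.
  have := @Mono_gen _ _ _ pref Ht _ _ _ _ (Oset_S 0). move=> HM. apply: HM; last by move=> k o; rewrite hp0 ltxx.
  move=> k o h; case: (support hD h) => [|[]]; auto.
have hd' : (d < D)%N by [].
have [H1 H2] := IH (ltnW hd').
have Hm := H2 hd'.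
have H1' : Hold pref (Oc d.+1) (p d.+1).
  move=> k o hp b hb.
  case: (support hd' hp) => [hp'|[hoB hg]].
    exact: H1 _ _ hp' _ (subsetP Hm _ hb).
  stepd hd'.
  have [_ hbest] := Aset_best (hg3 k o (actD hd' k) hoB hg).
  exact: hbest _ (subsetP Hm _ hb).
split => // hD.
have := @Mono_gen _ _ _ pref Ht _ _ _ _ (Oset_S d.+1). move=> HM. apply: HM H1'.
move=> k o h; case: (support hD h) => [|[]]; auto.
Qed.

Lemma monoB d d' : (d <= d')%N -> (d' <= D)%N -> B d' \subset B d.
Proof.
move=> /subnK <-; elim: (d' - d)%N => [|m IH] //= h.
apply: subset_trans (IH (ltnW h)).
have [_ H] := HoldD (ltnW h); exact: H.
Qed.

Lemma BD0 : B D = set0.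
Proof. apply: Oc0_Obar; exact: hOD. Qed.

Lemma stable d d' k o : (d <= d')%N -> (d' <= D)%N -> o \notin B d -> p d' k o = p d k o.
Proof.
move=> /subnK <-; elim: (d' - d)%N => [|m IH] //= h hB.
rewrite p_out //; first exact: IH (ltnW h) hB.
by apply: contra hB; apply: (subsetP (monoB (leq_addl _ _) (ltnW h))).
Qed.

Lemma recv d k h : (d <= D)%N -> 0 < p d k h ->
  exists2 d', (d' < d)%N & h \in B d' /\ forall b, b \in B d' -> pref k h b.
Proof.
elim: d => [|d IH] hd hp; first by move: hp; rewrite hp0 ltxx.
case: (support hd hp) => [hp'|[hB hg]].
  by have [d' h1 h2] := IH (ltnW hd) hp'; exists d' => //; apply: ltnW.
exists d => //.
stepd hd; exact: Aset_best (hg3 k h (actD hd k) hB hg).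
Qed.

Lemma Kd d k o b : (d <= D)%N -> 0 < p d k o -> o \notin B d -> b \in B d -> ~~ pref k b o.
Proof. move=> hd hp hn hb; have [H _] := HoldD hd; exact: (K_gen Ht H hp hn hb). Qed.


Lemma lam_zero d i o : (d < D)%N -> o \in B d -> o \notin Oc d -> o \notin Oti d i ->
  lam d.+1 i o = 0.
Proof.
move=> hd hB hc ho; stepd hd.
have h0 := hl1 i o (actD hd i) hB.
apply/eqP; rewrite eq_le h0 andbT leNgt; apply/negP => hp.
have : o \in Otil pref (Oc d) (p d) by rewrite /Otil in_setD hB hc.
by move=> /(hl4 i o (actD hd i))/(_ hp); rewrite (negbTE ho).
Qed.

Lemma mass d k (X : {set O}) : (d < D)%N -> B d \subset X ->
  \sum_(o in X) p d.+1 k o =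
  \sum_(o in X) p d k o + \sum_(o in Oc d) lam d.+1 k o * xO d.+1 o.
Proof.
move=> hd hX.
have hk := actD hd k.
have hOtiB : Oti d k \subset B d by apply/subsetP => o /Oti_sub [].
have hsplit : \sum_(o in B d) lam d.+1 k o * xO d.+1 o =
   \sum_(o in Oc d) lam d.+1 k o * xO d.+1 o + \sum_(o in Oti d k) lam d.+1 k o * xO d.+1 o.
  rewrite -(sum_if_sub _ (Oc_B d)) -(sum_if_sub _ hOtiB) -big_split /=.
  apply: eq_bigr => o hB.
  case: (boolP (o \in Oc d)) => hc.
    case: ifP => ho; last by rewrite addr0.
    by have [_] := Oti_sub ho; rewrite hc.
  case: ifP => ho; first by rewrite add0r.
  by rewrite (lam_zero hd hB hc (negbT ho)) mul0r addr0.
stepd hd.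
rewrite (eq_bigr (fun o => p d k o - (if o \in Oti d k then lam d.+1 k o * xO d.+1 o else 0)
    + (if o \in B d then gam d.+1 k o * xI d.+1 k else 0))); last by move=> o _; rewrite hpE hk.
rewrite big_split /= sumrB !sum_if_sub ?(subset_trans hOtiB hX) //.
rewrite -mulr_suml hg2 // mul1r hx2 // hsplit.
lra.
Qed.

Lemma sumIa d (F : I -> R) : (d < D)%N -> \sum_(i in Ia d) F i = \sum_i F i.
Proof. move=> hd; apply: eq_bigl => i; by rewrite actD. Qed.

Lemma conserv d o : (d <= D)%N -> \sum_i p d i o + \sum_i om d i o = \sum_i om 0%N i o.
Proof.
elim: d => [|d IH] hd.
  by rewrite (eq_bigr (fun _ => 0)) ?big1_eq ?add0r // => i _; rewrite hp0.
have hd' : (d < D)%N by [].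
rewrite -(IH (ltnW hd')).
have hs : \sum_i (if o \in Oti d i then lam d.+1 i o * xO d.+1 o else 0) =
   if (o \in B d) && (o \notin Oc d) then xO d.+1 o else 0.
  case: (boolP (o \in B d)) => hB /=; last first.
    apply: big1 => i _; case: ifP => // ho; by have [] := Oti_sub ho; rewrite (negbTE hB).
  case: (boolP (o \in Oc d)) => hc /=.
    apply: big1 => i _; case: ifP => // ho; by have [_] := Oti_sub ho; rewrite hc.
  stepd hd'.
  rewrite -[RHS]mul1r -(hl2 o hB) sumIa // mulr_suml; apply: eq_bigr => i _.
  case: ifP => // ho; by rewrite (lam_zero hd' hB hc (negbT ho)) mul0r.
have hz : o \notin Oc d -> \sum_i om d i o = 0.
  by move=> hc; apply: big1 => i _; apply: zero_out (ltnW hd') _ _ hc.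
stepd hd'.
rewrite [\sum_i p d.+1 i o](eq_bigr (fun i => p d i o - (if o \in Oti d i then lam d.+1 i o * xO d.+1 o else 0)
    + (if o \in B d then gam d.+1 i o * xI d.+1 i else 0))); last by move=> i _; rewrite hpE actD.
rewrite [\sum_i om d.+1 i o](eq_bigr (fun i => if o \in Oc d then om d i o - lam d.+1 i o * xO d.+1 o else 0)); last first.
  by move=> i _; rewrite homE actD.
rewrite big_split sumrB /= hs.
have hg : \sum_i (if o \in B d then gam d.+1 i o * xI d.+1 i else 0) =
          if o \in B d then xO d.+1 o else 0.
  case: ifP => hB; last by rewrite big1_eq.
  by rewrite hy2 // sumIa.
rewrite hg.
case: (boolP (o \in Oc d)) => hc.
  have hB := subsetP (Oc_B d) _ hc.
  rewrite hB /= sumrB -mulr_suml -(sumIa (fun i => lam d.+1 i o) hd') hl2 // mul1r; lra.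
rewrite big1_eq (hz hc) /=.
by case: (o \in B d) => /=; lra.
Qed.


Definition Vs i d := [set o | [forall b in B d, ~~ pref i b o]].

Lemma Vs_notB i d o : o \in Vs i d -> o \notin B d.
Proof.
rewrite inE => /forall_inP h; apply/negP => hb; have := h o hb.
by rewrite (pref_refl Hc).
Qed.

Lemma Vs_up i d a b : a \in Vs i d -> pref i b a -> b \in Vs i d.
Proof.
rewrite !inE => /forall_inP h hba; apply/forall_inP => c hc; apply/negP => hcb.
by have := h c hc; rewrite (ptrans Ht hcb hba).
Qed.

Lemma notB_Oc d o : o \notin B d -> o \notin Oc d.
Proof. by apply: contra; apply: (subsetP (Oc_B d)). Qed.

Lemma effic : sd_efficient pref (fun o => \sum_i om 0%N i o) (p D).
Proof.
move=> [P' [[hP0 [hcol hrow]] [hdom [j [_ [o0 hlt]]]]]].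
have E : forall d, (d <= D)%N -> forall i,
    \sum_(o in Vs i d) P' i o = \sum_(o in Vs i d) p D i o.
  move=> d hd.
  have ha : forall i, \sum_(o in Vs i d) p D i o <= \sum_(o in Vs i d) P' i o.
    move=> i; apply: (sd_upper Hc Ht (hdom i)) => a b; exact: Vs_up.
  have hb : \sum_i \sum_(o in Vs i d) p D i o = \sum_(o in ~: B d) \sum_i om 0%N i o.
    have hi : forall i, \sum_(o in Vs i d) p D i o = \sum_(o in ~: B d) p d i o.
      move=> i.
      rewrite (eq_bigr (fun o => p d i o)); last first.
        by move=> o ho; rewrite (@stable d D i o hd (leqnn D)) //; exact: Vs_notB ho.
      symmetry; apply: sum_sub_eq.
        by apply/subsetP => o ho; rewrite inE; apply: Vs_notB ho.
      move=> o; rewrite inE => hB hV.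
      have [h0 _] := nonneg hd i o; have [_ hp] := (nonneg hd i o).
      apply/eqP; rewrite eq_le hp andbT leNgt; apply/negP => hpos.
      move: hV; rewrite inE => /negP; apply; apply/forall_inP => b hb.
      exact: Kd hd hpos hB hb.
    rewrite (eq_bigr _ (fun i _ => hi i)) exchange_big /=.
    apply: eq_bigr => o; rewrite inE => hB.
    have hz : \sum_i om d i o = 0 by apply: big1 => i _; apply: zero_out hd _ _ (notB_Oc hB).
    by rewrite -(conserv o hd) hz addr0.
  have hc : \sum_i \sum_(o in Vs i d) P' i o <= \sum_(o in ~: B d) \sum_i om 0%N i o.
    apply: le_trans (_ : \sum_i \sum_(o in ~: B d) P' i o <= _).
      apply: ler_sum => i _; apply: sum_sub_le => //.
      by apply/subsetP => o ho; rewrite inE; apply: Vs_notB ho.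
    rewrite exchange_big /=; apply: ler_sum => o _; exact: hcol.
  have hsum : \sum_i (\sum_(o in Vs i d) P' i o - \sum_(o in Vs i d) p D i o) = 0.
    apply/eqP; rewrite eq_le sumr_ge0 ?andbT; last by move=> i _; rewrite subr_ge0; exact: ha.
    by rewrite sumrB hb subr_le0.
  have hge : forall i, true -> 0 <= \sum_(o in Vs i d) P' i o - \sum_(o in Vs i d) p D i o.
    by move=> i _; rewrite subr_ge0; exact: ha.
  move=> i; have h0 := psumr_eq0P hge hsum; have := @h0 i isT.
  by move/eqP; rewrite subr_eq0 => /eqP.
suff hle : forall i o, upper_sum pref i (P' i) o <= upper_sum pref i (p D i) o.
  by move: hlt; rewrite ltNge hle.
move=> i o.
pose S := [set o' | pref i o' o].
have hex : exists d, (d <= D)%N && [forall s in S, s \notin B d].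
  exists D; rewrite leqnn /=; apply/forall_inP => s _; by rewrite BD0 in_set0.
case: (ex_minnP hex) => ds /andP [hds hdisj] hmin.
have hSV : S \subset Vs i ds.
  apply/subsetP => o' ho'; rewrite inE; apply/forall_inP => b hb; apply/negP => hbo.
  have hbS : b \in S by move: ho'; rewrite !inE => h; exact: (ptrans Ht hbo h).
  by move/forall_inP: hdisj => /(_ b hbS); rewrite hb.
have eU : forall F : O -> R, upper_sum pref i F o = \sum_(o' in S) F o'.
  by move=> F; rewrite /upper_sum; apply: eq_bigl => o'; rewrite inE.
rewrite !eU.
apply: le_trans (sum_sub_le hSV (hP0 i)) _.
rewrite E // (sum_sub_eq hSV) //.
move=> h hV hnS.
have [_ hp] := nonneg (leqnn D) i h.
apply/eqP; rewrite eq_le hp andbT leNgt; apply/negP => hpos.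
have hpos' : 0 < p ds i h by rewrite -(@stable ds D i h hds (leqnn D) (Vs_notB hV)).
have [d' hd' [hB' hbest]] := recv hds hpos'.
have : ~~ [forall s in S, s \notin B d'].
  apply/negP => hf; have := hmin d'; rewrite (leq_trans (ltnW hd') hds) hf leqNgt hd'.
  by move=> /(_ isT).
move=> /forall_inPn [s hs]; rewrite negbK => hsB.
move: hnS; rewrite inE => /negP; apply.
move: hs; rewrite inE => hs; exact: (ptrans Ht (hbest s hsB) hs).
Qed.


Lemma c_eq d : (d < D)%N -> forall a b,
  \sum_(o in Oc d) lam d.+1 a o * xO d.+1 o = \sum_(o in Oc d) lam d.+1 b o * xO d.+1 o.
Proof. move=> hd a b; apply: eq_bigr => o ho; by rewrite (lam_eq hd a b ho). Qed.

Lemma massEq d : (d <= D)%N -> forall a b,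
  \sum_(o in [set: O]) p d a o = \sum_(o in [set: O]) p d b o.
Proof.
elim: d => [|d IH] hd a b.
  by rewrite !big1 // => o _; rewrite hp0.
have hd' : (d < D)%N by [].
by rewrite !mass ?subsetT // (IH (ltnW hd') a b) (c_eq hd' a b).
Qed.

Lemma ef : envy_free pref (p D).
Proof.
move=> a b o.
pose S := [set o' | pref a o' o]; pose N := ~: S.
have hge : forall k d, (d <= D)%N -> 0 <= \sum_(x in N) p d k x.
  by move=> k d hd; apply: sumr_ge0 => x _; case: (nonneg hd k x).
have inv : forall d, (d <= D)%N ->
    \sum_(x in N) p d a x <= \sum_(x in N) p d b x /\
    ((exists2 s, s \in S & s \in B d) -> \sum_(x in N) p d a x <= 0).
  elim => [|d IH] hd.
    have z : forall k, \sum_(x in N) p 0%N k x = 0 by move=> k; apply: big1 => x _; exact: hp0.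
    by rewrite !z.
  have hd' : (d < D)%N by [].
  have [IH1 IH2] := IH (ltnW hd').
  case: (boolP [exists s in S, s \in B d]) => hF.
    move/exists_inP: hF => [s hs hsB].
    have hdec : \sum_(x in N) p d.+1 a x <= \sum_(x in N) p d a x.
      apply: ler_sum => x hx.
      have hs0 := sold_ge0 a x hd'.
      stepd hd'; rewrite hpE (actD hd').
      have hg0 : x \in B d -> gam d.+1 a x = 0.
        move=> hxB.
        apply/eqP; rewrite eq_le (hg1 a x (actD hd' a) hxB) andbT leNgt; apply/negP => hg.
        have [_ hbest] := Aset_best (hg3 a x (actD hd' a) hxB hg).
        move: hx; rewrite in_setC => /negP; apply.
        move: hs; rewrite !inE => hs; exact: (ptrans Ht (hbest s hsB) hs).
      case: (boolP (x \in B d)) => hxB.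
        rewrite (hg0 hxB) mul0r addr0; lra.
      lra.
    have h0 := IH2 (ex_intro2 _ _ s hs hsB).
    have hb := hge b d.+1 hd.
    split; [lra | move=> _; lra].
  have hBN : B d \subset N.
    apply/subsetP => x hx; rewrite in_setC; apply/negP => hxS.
    by move/negP: hF; apply; apply/exists_inP; exists x.
  rewrite !mass // (c_eq hd' a b).
  split; first lra.
  move=> [s hs hsB]; exfalso; move/negP: hF; apply; apply/exists_inP; exists s => //.
  exact: (subsetP (monoB (leqnSn d) hd)).
have [h1 _] := inv D (leqnn D).
have eT : forall F : O -> R, \sum_(x in [set: O]) F x = \sum_(x in S) F x + \sum_(x in N) F x.
  move=> F; rewrite (bigID (fun x => x \in S)) /=; congr (_ + _); apply: eq_bigl => x.
    by rewrite in_setT.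
  by rewrite in_setT in_setC.
have eU : forall F : O -> R, upper_sum pref a F o = \sum_(o' in S) F o'.
  by move=> F; rewrite /upper_sum; apply: eq_bigl => o'; rewrite inE.
rewrite !eU.
have := massEq (leqnn D) a b; rewrite !eT; lra.
Qed.

End Run.

Theorem mainTheorem6 (R : realType) (I O : finType) (pref : I -> rel O)
    (om p : nat -> I -> O -> R) (lam beta gam : nat -> I -> O -> R)
    (xI : nat -> I -> R) (xO : nat -> O -> R) (D : nat) :
  (forall i, complete_pref (pref i)) ->
  (forall i, transitive_pref (pref i)) ->
  #|O| = #|I| ->
  (forall i o, om 0%N i o = (#|I|%:R)^-1) ->
  fttc_run pref om p lam beta gam xI xO D ->
  run_EEET pref om p lam D ->
  sd_efficient pref (fun o => \sum_i om 0%N i o) (p D) /\ envy_free pref (p D).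
Proof.
move=> Hc Ht HOI Hom0 Hrun HE; split.
  exact: (effic Hc Ht HOI Hom0 Hrun HE).
exact: (@ef R I O pref om p lam beta gam xI xO D Ht HOI Hom0 Hrun HE).
Qed.
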